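(* Let $\varepsilon>0$ and let $f:\{0,1\}^n\to\{0,1\}$ be a symmetric function with $\mathrm{bias}(f)\ge\varepsilon$. Draw $x_1,\dots,x_n$ independently and uniformly from $\{0,1\}$, and let $\tau^{(0)}$ be the smallest $t$ such that the restriction of $f$ obtained by fixing the first $t$ variables to $x_1,\dots,x_t$ is a constant function. Then $\mathbb{E}[\tau^{(0)}]\ge\Omega\!\left(\frac{n}{\log(1/\varepsilon)}\right)$, with an absolute implied constant.
   Context: $f$ is symmetric if $f(x)=f(y)$ whenever $x,y$ have the same number of ones. $\mathrm{bias}(f)=\min\{\Pr_{x}[f(x)\ne0],\Pr_x[f(x)\ne1]\}$ for uniform $x\in\{0,1\}^n$. *)

(* Defs.v *)
From HB Require Import structures.
From mathcomp Require Import all_boot all_order all_algebra.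
From mathcomp Require Import reals exp.
Set Implicit Arguments. Unset Strict Implicit. Unset Printing Implicit Defensive.
Import Order.TTheory GRing.Theory Num.Theory.
Local Open Scope ring_scope.

(* Points of the hypercube {0,1}^n; variable x_{i+1} is [x i], for i : 'I_n. *)
Definition cube (n : nat) := {ffun 'I_n -> bool}.

Definition weight n (x : cube n) : nat := #|[set i | x i]|.

Definition symmetric_fun n (f : cube n -> bool) : Prop :=
  forall x y : cube n, weight x = weight y -> f x = f y.

Definition prob_eq (R : realType) n (f : cube n -> bool) (b : bool) : R :=
  #|[set x : cube n | f x == b]|%:R / (2 ^ n)%:R.

Definition bias (R : realType) n (f : cube n -> bool) : R :=
  Num.min (prob_eq R f true) (prob_eq R f false).

Definition const_after n (f : cube n -> bool) (x : cube n) (t : nat) : bool :=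
  [forall y : cube n,
     [forall i : 'I_n, (i < t)%N ==> (y i == x i)] ==> (f y == f x)].

(* tau^(0)(x): the smallest t (0 <= t <= n) such that const_after holds
   (it always holds for t = n, so [find] returns the least such t). *)
Definition tau0 n (f : cube n -> bool) (x : cube n) : nat :=
  find (const_after f x) (iota 0 n.+1).

Definition expected_tau0 (R : realType) n (f : cube n -> bool) : R :=
  (\sum_(x : cube n) (tau0 f x)%:R) / (2 ^ n)%:R.

(* Main.v *)
Require Import Defs.
From HB Require Import structures.
From mathcomp Require Import all_boot all_order all_algebra.
From mathcomp Require Import reals exp.
From mathcomp Require Import zify ring lra.
Import Order.TTheory GRing.Theory Num.Theory.
Set Implicit Arguments. Unset Strict Implicit. Unset Printing Implicit Defensive.

Lemma prod_cube n (y : cube n) a b :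
  \prod_(i < n) (if y i then a else b) = a ^ weight y * b ^ (n - weight y).
Proof.
rewrite (bigID (fun i => y i)) /=.
rewrite (eq_bigr (fun _ => a)); last by move=> i ->.
rewrite [X in _ * X](eq_bigr (fun _ => b)); last by move=> i /negbTE ->.
have -> : \prod_(i < n | y i) a = a ^ weight y.
  rewrite /weight -(prod_nat_const (mem [set i | y i])); apply: eq_bigl => i; by rewrite inE.
have -> : \prod_(i < n | ~~ y i) b = b ^ (n - weight y).
  have hc := cardsC [set i : 'I_n | y i]; rewrite card_ord in hc.
  have -> : (n - weight y = #|~: [set i : 'I_n | y i]|)%N by rewrite /weight -[X in (X - _)%N]hc addKn.
  rewrite -(prod_nat_const (mem (~: [set i | y i]))); apply: eq_bigl => i; by rewrite !inE.
by [].
Qed.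

Lemma sum_cube n a b :
  \sum_(y : cube n) a ^ weight y * b ^ (n - weight y) = (a + b) ^ n.
Proof.
have := @bigA_distr_bigA nat 0 1 muln addn 'I_n bool (fun (i : 'I_n) (j : bool) => if j then a else b).
move=> H.
rewrite (eq_bigr (fun y : cube n => \prod_(i < n) (if y i then a else b))); last by move=> y _; rewrite prod_cube.
rewrite -H.
rewrite (eq_bigr (fun _ => a + b)); last by move=> i _; rewrite big_bool.
by rewrite prod_nat_const card_ord.
Qed.

Definition zz n (x : cube n) (s j : nat) : cube n :=
  [ffun i : 'I_n => if (i < s)%N then x i else (i < s + j)%N].

Lemma zz_step n (x : cube n) s j : (s + j < n)%N ->
  weight (zz x s j.+1) = (weight (zz x s j)).+1.
Proof.
rewrite /weight; move=> hk; set k : 'I_n := Ordinal hk.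
have -> : [set i | zz x s j.+1 i] = k |: [set i | zz x s j i].
  apply/setP => i; rewrite !inE !ffunE -(inj_eq val_inj) /=.
  case: (ltnP i s) => h.
    by rewrite (_ : (i == s + j :> nat) = false) //; apply/negbTE; lia.
  by rewrite addnS ltnS leq_eqVlt.
rewrite cardsU1 inE ffunE /= ltnn.
by rewrite ltnNge leq_addr.
Qed.

Lemma zz_weight n (x : cube n) s j : (s + j <= n)%N ->
  weight (zz x s j) = (weight (zz x s 0) + j)%N.
Proof.
elim: j => [|j IH] h; first by rewrite addn0.
by rewrite zz_step ?IH ?addnS //; lia.
Qed.

Lemma weight_le n (x : cube n) : (weight x <= n)%N.
Proof. by rewrite /weight -[X in (_ <= X)%N]card_ord max_card. Qed.

Lemma key n (f : cube n -> bool) (x y : cube n) s :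
  symmetric_fun f -> (s <= n)%N -> const_after f x s ->
  (s <= weight y)%N -> (weight y <= n - s)%N -> f y = f x.
Proof.
move=> hsym hs /forallP hc h1 h2.
have hw := @zz_weight n x s (n - s) (eq_leq (subnKC hs)).
have := weight_le (zz x s (n - s)); rewrite hw => h3.
set w0 := weight (zz x s 0) in h3 hw.
have hj : (s + (weight y - w0) <= n)%N by lia.
have e : weight (zz x s (weight y - w0)) = weight y by rewrite zz_weight //; lia.
rewrite (hsym _ _ (esym e)).
apply/eqP; move: (hc (zz x s (weight y - w0))) => /implyP; apply.
by apply/forallP => i; apply/implyP => hi; rewrite ffunE hi.
Qed.

Lemma sum_bound n (P : {set cube n}) (g : cube n -> nat) c :
  (forall y, y \in P -> 2 ^ n <= c * g y)%N -> (#|P| * 2 ^ n <= c * \sum_y g y)%N.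
Proof.
move=> H; rewrite -sum_nat_const big_distrr /= (big_mkcond (fun y => y \in P)) /=.
apply: leq_sum => y _; case: ifP => // /H //.
Qed.

Lemma count_bad n (f : cube n -> bool) (x : cube n) s :
  symmetric_fun f -> (s <= n)%N -> const_after f x s ->
  (#|[set y | f y == ~~ f x]| * 2 ^ n <= 2 * 2 ^ s * 3 ^ n)%N.
Proof.
move=> hsym hs hc.
set A := [set y : cube n | (weight y < s)%N].
set B := [set y : cube n | (n - s < weight y)%N].
have sub : [set y | f y == ~~ f x] \subset A :|: B.
  apply/subsetP => y; rewrite !inE => /eqP hy.
  case: (ltnP (weight y) s) => //= h1; case: (ltnP (n - s) (weight y)) => //= h2.
  by move: hy; rewrite (key hsym hs hc h1 h2); case: (f x).
have hA : (#|A| * 2 ^ n <= 2 ^ s * 3 ^ n)%N.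
  rewrite -(sum_cube n 1 2); apply: sum_bound => y; rewrite inE => h.
  rewrite exp1n mul1n -expnD leq_exp2l //. have := weight_le y. lia.
have hB : (#|B| * 2 ^ n <= 2 ^ s * 3 ^ n)%N.
  rewrite -(sum_cube n 2 1); apply: sum_bound => y; rewrite inE => h.
  rewrite exp1n muln1 -expnD leq_exp2l //. lia.
have := leq_trans (subset_leq_card sub) (leq_card_setU A B).
move=> h; apply: leq_trans (leq_mul h (leqnn _)) _. rewrite mulnDl. lia.
Qed.

Lemma tau0_const n (f : cube n -> bool) x :
  (tau0 f x <= n)%N -> const_after f x (tau0 f x).
Proof.
rewrite /tau0 => h.
have hh : has (const_after f x) (iota 0 n.+1) by rewrite has_find size_iota.
by have := nth_find 0 hh; rewrite nth_iota ?add0n.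
Qed.

Lemma card_cube n : #|{: cube n}| = (2 ^ n)%N.
Proof. by rewrite card_ffun card_bool card_ord. Qed.

Local Open Scope ring_scope.

Lemma exp_ge (R : realType) n (f : cube n -> bool) k :
  (forall x, k <= tau0 f x)%N -> k%:R <= expected_tau0 R f.
Proof.
move=> H; rewrite /expected_tau0 ler_pdivlMr ?ltr0n ?expn_gt0 //.
rewrite -natr_sum -natrM ler_nat mulnC -card_cube -sum_nat_const.
by apply: leq_sum => x _; apply: H.
Qed.

Lemma ln_le_sub1 (R : realType) (y : R) : 0 < y -> ln y <= y - 1.
Proof.
move=> hy; have := expR_ge1Dx (ln y); rewrite lnK ?posrE //; lra.
Qed.

Lemma ln_ge (R : realType) (y : R) : 0 < y -> 1 - y^-1 <= ln y.
Proof.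
move=> hy; have := @ln_le_sub1 R y^-1; rewrite invr_gt0 => /(_ hy); rewrite lnV ?posrE //; lra.
Qed.

Lemma eps_le_prob (R : realType) n (f : cube n -> bool) (eps : R) b :
  eps <= bias R f -> eps <= prob_eq R f b.
Proof.
move=> h; apply: le_trans h _; rewrite /bias; case: b.
  by rewrite ge_min lexx.
by rewrite ge_min lexx orbT.
Qed.

Lemma prob_sum (R : realType) n (f : cube n -> bool) :
  prob_eq R f true + prob_eq R f false = 1.
Proof.
rewrite /prob_eq -mulrDl -natrD.
have -> : [set x | f x == false] = ~: [set x | f x == true].
  by apply/setP => x; rewrite !inE; case: (f x).
by rewrite cardsC card_cube divff // pnatr_eq0 -lt0n expn_gt0.
Qed.

Lemma aux1 (R : realType) (T N EL : R) : T <= 2 * EL -> N <= 8 * T -> 0 <= N -> N <= 32 * EL.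
Proof. lra. Qed.

Lemma aux2 (R : realType) (N Tn T A B L EL : R) : A <= L + B -> N * (1/4) <= A -> B <= T ->
  T = Tn + 1 -> 8 * Tn <= N -> 1/2 <= L -> L <= EL -> 32^-1 * N <= EL.
Proof. move=> *; lra. Qed.

Theorem mainTheorem7 :
  exists c : rat, 0 < c /\
    forall (R : realType) (n : nat) (eps : R) (f : cube n -> bool),
      0 < eps -> symmetric_fun f -> eps <= bias R f ->
      ratr c * n%:R / ln (eps^-1) <= expected_tau0 R f.
Proof.
exists (32%:R^-1); split; first by rewrite invr_gt0 ltr0n.
move=> R n eps f he hsym hb.
rewrite fmorphV /= ratr_nat.
set L := ln eps^-1.
have hp1 := eps_le_prob true hb; have hp0 := eps_le_prob false hb.
have hsum := prob_sum R f.
have heps : eps <= 1/2 by lra.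
have hL : 1/2 <= L.
  rewrite /L lnV ?posrE //; have := ln_le_sub1 he; lra.
have hL0 : 0 < L by lra.
have hbad : forall x s, (s <= n)%N -> const_after f x s ->
    eps * (2^n)%:R * (2^n)%:R <= (2 * 2^s * 3^n)%:R.
  move=> x s hs hc; have h2 := count_bad hsym hs hc.
  have := eps_le_prob (~~ f x) hb; rewrite /prob_eq ler_pdivlMr ?ltr0n ?expn_gt0 // => h1.
  have h3 : eps * (2^n)%:R * (2^n)%:R <= #|[set y | f y == ~~ f x]|%:R * (2^n)%:R.
    by apply: ler_wpM2r.
  apply: le_trans h3 _.
  by rewrite -natrM ler_nat.
have htau1 : forall x, (1 <= tau0 f x)%N.
  move=> x; rewrite lt0n; apply/negP => /eqP h0.
  have hc := @tau0_const n f x; rewrite h0 in hc; have {}hc := hc (leq0n n).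
  have := eps_le_prob (~~ f x) hb; rewrite /prob_eq.
  have -> : [set y | f y == ~~ f x] = set0.
    apply/setP => y; rewrite !inE (key hsym (leq0n n) hc (leq0n _)); last by rewrite subn0 weight_le.
    by case: (f x).
  rewrite cards0 mul0r => h; lra.
have hE1 := exp_ge R htau1.
set t := (n %/ 8)%N.
case: (ltP ((2 * 2 ^ t * 3^n)%:R) (eps * (2^n)%:R * (2^n)%:R)) => hP.
- have ht : forall x, (t.+1 <= tau0 f x)%N.
    move=> x; rewrite ltnNge; apply/negP => h.
    have hs : (tau0 f x <= n)%N by apply: leq_trans h _; rewrite leq_div.
    have h4 := hbad x _ hs (tau0_const hs).
    have h3 : (2 * 2^(tau0 f x) * 3^n)%:R <= (2 * 2 ^ t * 3 ^ n)%:R :> R.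
      by rewrite ler_nat; apply: leq_mul => //; apply: leq_mul => //; apply: leq_pexp2l.
    by have := le_lt_trans (le_trans h4 h3) hP; rewrite ltxx.
  have hE := exp_ge R ht.
  have hn : (n <= 8 * t.+1)%N by rewrite /t; lia.
  have hnR : n%:R <= 8 * (t.+1)%:R :> R by rewrite -(natrM R 8) ler_nat.
  have hn0 : 0 <= n%:R :> R by rewrite ler0n.
  rewrite ler_pdivrMr //.
  have hL2 : 1 <= 2 * L by lra.
  have H : (t.+1)%:R * 1 <= expected_tau0 R f * (2 * L) by apply: ler_pM => //; lra.
  rewrite mulrCA mulr1 in H.
  rewrite ler_pdivrMl ?ltr0n //.
  move: H hnR hn0 hL0; clear; move: (expected_tau0 R f) => E; clearbody L t.
  move: (E * L) => EL; set T := (t.+1)%:R; set N := n%:R; clearbody T N.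
  move=> h1 h2 h3 _; exact: (aux1 h1 h2 h3).
- have hP' : eps * (2 ^+ n * 2 ^+ n) <= 2 ^+ t.+1 * 3 ^+ n :> R.
    by move: hP; rewrite !natrM !natrX mulrA -exprS.
  have hcl : (4/3) ^+ n <= eps^-1 * 2 ^+ t.+1 :> R.
    rewrite expr_div_n (_ : 4 = 2 * 2 :> R); last by lra.
    rewrite exprMn ler_pdivrMr ?exprn_gt0 //.
    rewrite -(ler_pM2l he) !mulrA mulfV ?mul1r; last by lra.
    by rewrite -mulrA.
  move: hcl; rewrite -ler_ln ?posrE ?exprn_gt0 ?mulr_gt0 ?invr_gt0 //; last by rewrite exprn_gt0.
  rewrite lnM ?posrE ?invr_gt0 ?exprn_gt0 //.
  rewrite !lnXn //; last by lra.
  rewrite -/L -[ln (4/3) *+ n]mulr_natr -[ln 2 *+ t.+1]mulr_natr => hl.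
  have h43 : 1/4 <= ln (4/3 : R).
    have := @ln_ge R (4/3); rewrite invf_div; move=> /(_ ltac:(lra)); lra.
  have h2 : ln (2 : R) <= 1 by have := @ln_le_sub1 R 2; move=> /(_ ltac:(lra)); lra.
  have ha : n%:R * (1/4) <= ln (4/3 : R) * n%:R.
    by rewrite [X in _ <= X]mulrC; apply: ler_wpM2l; rewrite ?ler0n.
  have hb2 : ln (2:R) * (t.+1)%:R <= (t.+1)%:R.
    by rewrite -[X in _ <= X]mul1r; apply: ler_wpM2r; rewrite ?ler0n.
  have hT : (t.+1)%:R = t%:R + 1 :> R by rewrite -natr1.
  have hn : (8 * t <= n)%N by rewrite /t mulnC leq_trunc_div.
  have hnR : 8 * t%:R <= n%:R :> R by rewrite -(natrM R 8) ler_nat.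
  have hEL := ler_wpM2r (ltW hL0) hE1; rewrite mul1r in hEL.
  rewrite ler_pdivrMr //.
  exact: (aux2 hl ha hb2 hT hnR hL hEL).
Qed.
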